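(* Let $X$ be a hyperbolic approximation of $Z$. Any two vertices $v,v'\in V$ can be connected in $X$ by a geodesic which contains at most one horizontal edge; if it contains such an edge, this edge lies on the lowest level attained by the geodesic.
   Context: Hyperbolic approximation: let $(Z,d)$ be a bounded metric space with at least two points and fix $0<r\le1/6$. Let $k_0$ be the largest integer with $\operatorname{diam}Z<r^{k_0}$. For each integer $k\ge k_0$ choose a maximal $r^k$-separated subset $V_k\subset Z$. Vertex set $V=\bigsqcup_{k\ge k_0}V_k$ (disjoint union), level $\ell(v)=k$ for $v\in V_k$, ball $B(v)=\{z:d(z,v)<2r^k\}$ with closure $\overline B(v)$. Edges: $v,v'$ of equal level with $\overline B(v)\cap\overline B(v')\neq\emptyset$ (horizontal edges), or levels differing by one with the ball of the higher-level vertex contained in the ball of the lower-level one (radial edges). Path metric with unit edges, denoted $|vv'|$. *)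

(* Defs.v *)
From mathcomp Require Import all_boot all_order all_algebra.
From mathcomp Require Import boolp classical_sets reals.
Set Implicit Arguments. Unset Strict Implicit. Unset Printing Implicit Defensive.
Import Order.TTheory GRing.Theory Num.Theory.
Local Open Scope ring_scope.
Local Open Scope classical_set_scope.

Definition is_metric (R : realType) (Z : Type) (d : Z -> Z -> R) : Prop :=
  (forall x y, 0 <= d x y) /\ (forall x y, d x y = 0 <-> x = y) /\
  (forall x y, d x y = d y x) /\ (forall x y z, d x z <= d x y + d y z).

Definition bounded_metric (R : realType) (Z : Type) (d : Z -> Z -> R) : Prop :=
  exists M : R, forall x y, d x y <= M.

Definition diam (R : realType) (Z : Type) (d : Z -> Z -> R) : R :=
  sup [set d x y | x in [set: Z] & y in [set: Z]].

Definition separated (R : realType) (Z : Type) (d : Z -> Z -> R) (e : R)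
  (A : set Z) : Prop :=
  forall x y, A x -> A y -> x <> y -> e <= d x y.

Definition maximal_separated (R : realType) (Z : Type) (d : Z -> Z -> R)
  (e : R) (A : set Z) : Prop :=
  separated d e A /\ (forall B, A `<=` B -> separated d e B -> B `<=` A).

Definition mclosure (R : realType) (Z : Type) (d : Z -> Z -> R) (A : set Z)
  : set Z :=
  [set z | forall eps : R, 0 < eps -> exists2 w, A w & d z w < eps].

(* vertices of the hyperbolic approximation: a level k and a point of V_k
   (the tag k makes V the disjoint union of the V_k) *)
Record vertex (Z : Type) := Vx { lev : int; pt : Z }.

Definition is_vertex (Z : Type) (k0 : int) (V : int -> set Z) (v : vertex Z)
  : Prop := (k0 <= lev v)%R /\ V (lev v) (pt v).

Definition vball (R : realType) (Z : Type) (d : Z -> Z -> R) (r : R)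
  (v : vertex Z) : set Z :=
  [set z | d z (pt v) < 2 * r ^ (lev v)].

Definition horiz_edge (R : realType) (Z : Type) (d : Z -> Z -> R) (r : R)
  (k0 : int) (V : int -> set Z) (v w : vertex Z) : Prop :=
  is_vertex k0 V v /\ is_vertex k0 V w /\ v <> w /\ lev v = lev w /\
  exists z, mclosure d (vball d r v) z /\ mclosure d (vball d r w) z.

Definition radial_edge (R : realType) (Z : Type) (d : Z -> Z -> R) (r : R)
  (k0 : int) (V : int -> set Z) (v w : vertex Z) : Prop :=
  is_vertex k0 V v /\ is_vertex k0 V w /\
  ((lev w = lev v + 1 /\ vball d r w `<=` vball d r v) \/
   (lev v = lev w + 1 /\ vball d r v `<=` vball d r w)).

Definition adj (R : realType) (Z : Type) (d : Z -> Z -> R) (r : R)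
  (k0 : int) (V : int -> set Z) (v w : vertex Z) : Prop :=
  horiz_edge d r k0 V v w \/ radial_edge d r k0 V v w.

Definition is_walk (Z : Type) (e : vertex Z -> vertex Z -> Prop) (n : nat)
  (f : nat -> vertex Z) (v w : vertex Z) : Prop :=
  f 0%N = v /\ f n = w /\ forall i, (i < n)%N -> e (f i) (f i.+1).

(* geodesic for the unit-edge path metric: a path of minimal length *)
Definition is_geodesic (Z : Type) (e : vertex Z -> vertex Z -> Prop) (n : nat)
  (f : nat -> vertex Z) (v w : vertex Z) : Prop :=
  is_walk e n f v w /\ forall m g, is_walk e m g v w -> (n <= m)%N.

(* Main.v *)
Require Import Defs.
From mathcomp Require Import all_boot all_order all_algebra.
From mathcomp Require Import boolp classical_sets reals.
From mathcomp Require Import zify lra.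
From Stdlib Require Import Classical.
Import Order.TTheory GRing.Theory Num.Theory.

Section Walks.
Variable (Z : Type) (e : vertex Z -> vertex Z -> Prop).

Lemma walk_cons n f x v w : e x v -> is_walk e n f v w ->
  is_walk e n.+1 (fun i => if i is j.+1 then f j else x) x w.
Proof.
move=> exv [f0 [fn fs]]; split => //; split => //.
case => [|i] /= hi; first by rewrite f0.
exact: fs.
Qed.

Lemma walk_snoc n f v w x : is_walk e n f v w -> e w x ->
  is_walk e n.+1 (fun i => if (i <= n)%N then f i else x) v x.
Proof.
move=> [f0 [fn fs]] ewx; split => //; split; first by rewrite ltnn.
move=> i hi /=; case: (ltnP i n) => hin.
  have -> : (i <= n)%N = true by lia.
  by apply: fs.
have -> : i = n by lia.
rewrite leqnn fn; try (have -> : (n.+1 <= n)%N = false by lia); by [].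
Qed.

Lemma walk_splice n f v w a m : is_walk e n f v w -> (a + m <= n)%N ->
  ((a + m < n)%N -> e (f a) (f (a + m).+1)) -> (a + m = n -> f a = w) ->
  is_walk e (n - m) (fun i => if (i <= a)%N then f i else f (i + m)) v w.
Proof.
move=> [f0 [fn fs]] ham h1 h2; split => //; split.
  rewrite /=; case: (leqP (n - m) a) => h.
    have e1 : a + m = n by lia.
    have e2 : (n - m = a)%N by lia.
    by rewrite e2 h2.
  have -> : (n - m + m = n)%N by lia.
  by [].
move=> i hi /=; case: (ltngtP i a) => hia.
- apply: fs; lia.
- have -> : (i.+1 + m = (i + m).+1)%N by lia.
  apply: fs; lia.
- subst i.
  have -> : (a.+1 + m = (a + m).+1)%N by lia.
  apply: h1; lia.
Qed.

Lemma walk_replace n f v w a p : is_walk e n f v w -> (a.+2 <= n)%N ->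
  e (f a) p -> e p (f a.+2) ->
  is_walk e n (fun i => if i == a.+1 then p else f i) v w.
Proof.
move=> [f0 [fn fs]] han h1 h2; split => //; split.
  by have -> : (n == a.+1) = false by apply/eqP; lia.
move=> i hi /=; case: (eqVneq i a.+1) => hia.
  subst i; have -> : (a.+2 == a.+1) = false by apply/eqP; lia.
  exact: h2.
case: (eqVneq i.+1 a.+1) => hib.
  by case: hib => ->.
exact: fs.
Qed.

End Walks.
Arguments walk_cons {Z e n f x v w}.
Arguments walk_snoc {Z e n f v w x}.
Arguments walk_splice {Z e n f v w} a m.
Arguments walk_replace {Z e n f v w a p}.

Lemma sum_lt (F G : nat -> nat) n c : (c < n)%N ->
  (forall i, i != c -> G i = F i) -> (G c < F c)%N ->
  (\sum_(0 <= i < n) G i < \sum_(0 <= i < n) F i)%N.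
Proof.
elim: n => [//|n IH] hc hGF hc'.
rewrite !big_nat_recr //=.
case: (eqVneq c n) => hcn.
  subst c.
  have -> : \sum_(0 <= i < n) G i = \sum_(0 <= i < n) F i.
    apply: eq_big_nat => i hi; apply: hGF; apply/eqP; lia.
  lia.
have := IH ltac:(lia) hGF hc'.
rewrite hGF; last by rewrite eq_sym.
lia.
Qed.

Local Open Scope ring_scope.
Local Open Scope classical_set_scope.

Section HA.
Variables (R : realType) (Z : Type) (d : Z -> Z -> R) (r : R) (k0 : int)
  (V : int -> set Z).
Hypotheses (hm : is_metric d) (hb : bounded_metric d) (r0 : 0 < r)
  (r6 : r <= 6^-1) (hdiam : diam d < r ^ k0)
  (hsep : forall k : int, k0 <= k -> maximal_separated d (r ^ k) (V k)).

Local Notation adjv := (adj d r k0 V).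
Local Notation isv := (is_vertex k0 V).

Lemma d0 x : d x x = 0.
Proof. by case: hm => _ [h _]; apply/h. Qed.
Lemma dge0 x y : 0 <= d x y.
Proof. by case: hm. Qed.
Lemma dsym x y : d x y = d y x.
Proof. by case: hm => _ [_ [h _]]. Qed.
Lemma dtri x y z : d x z <= d x y + d y z.
Proof. by case: hm => _ [_ [_ h]]. Qed.

Lemma d_le_diam x y : d x y <= diam d.
Proof.
rewrite /diam; case: hb => M hM.
apply: sup_upper_bound.
  split; first by exists (d x y); exists x => //; exists y.
  by exists M => z [a _ [b _ <-]].
by exists x => //; exists y.
Qed.

Lemma rk_gt0 (k : int) : 0 < r ^ k.
Proof. exact: exprz_gt0. Qed.

Lemma rk6 (k : int) : 6 * r ^ k <= r ^ (k - 1).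
Proof.
have -> : r ^ k = r ^ (k - 1) * r.
  by rewrite -[r in _ * r]expr1z -expfzDr ?gt_eqF // subrK.
have h6 : 6 * r <= 1.
  have := r6; rewrite -(@ler_pM2l _ 6) // mulfV //.
have := rk_gt0 (k - 1); nra.
have := rk_gt0 (k - 1); nra.
Qed.

Lemma near_pt (k : int) : k0 <= k -> forall x, exists w, V k w /\ d x w < r ^ k.
Proof.
move=> hk x; apply: NNPP => Hn.
have H : forall w, V k w -> r ^ k <= d x w.
  move=> w Vw; case: (lerP (r ^ k) (d x w)) => // h.
  by exfalso; apply: Hn; exists w.
have [sepV maxV] := hsep _ hk.
have : (V k `|` [set x]) `<=` V k.
  apply: maxV; first by move=> z Vz; left.
  move=> a b [Va|->] [Vb|->] ab.
  - exact: sepV.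
  - by rewrite dsym; apply: H.
  - exact: H.
  - by [].
move=> /(_ x (or_intror erefl)) /H.
by rewrite d0; have := rk_gt0 k; lra.
Qed.

Lemma parent y : isv y -> k0 <= lev y - 1 ->
  exists p, isv p /\ lev p = lev y - 1 /\ d (pt y) (pt p) < r ^ (lev y - 1).
Proof.
move=> hy hk; have [w [Vw dw]] := near_pt _ hk (pt y).
by exists (Vx (lev y - 1) w).
Qed.
Arguments parent [y] _ _.


Lemma ball_sub x p : d (pt x) (pt p) + 2 * r ^ lev x <= 2 * r ^ lev p ->
  vball d r x `<=` vball d r p.
Proof.
move=> h z; rewrite /vball /= => hz.
have := dtri z (pt x) (pt p); lra.
Qed.

Lemma parent_sub y p : lev p = lev y - 1 -> d (pt y) (pt p) < r ^ (lev y - 1) ->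
  vball d r y `<=` vball d r p.
Proof.
move=> hl hd; apply: ball_sub; rewrite hl.
have := rk6 (lev y); have := rk_gt0 (lev y - 1); lra.
Qed.
Arguments parent_sub [y p] _.


Lemma clos_dist x c : mclosure d (vball d r x) c -> d c (pt x) <= 2 * r ^ lev x.
Proof.
move=> hc; apply/ler_addgt0Pr => eps heps.
have [w hw hcw] := hc eps heps.
move: hw; rewrite /vball /= => hw.
have := dtri c w (pt x); lra.
Qed.
Arguments clos_dist [x c] _.


Lemma sub_clos (A B : set Z) : A `<=` B -> mclosure d A `<=` mclosure d B.
Proof. by move=> hAB z hz eps he; have [w hw h] := hz eps he; exists w => //; apply: hAB. Qed.
Arguments sub_clos [A B] _.


Lemma in_clos (A : set Z) z : A z -> mclosure d A z.
Proof. by move=> hz eps he; exists z => //; rewrite d0. Qed.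
Arguments in_clos [A z] _.


Lemma ball_center x : vball d r x (pt x).
Proof. by rewrite /vball /= d0; have := rk_gt0 (lev x); lra. Qed.

Lemma horiz_dist x y : horiz_edge d r k0 V x y ->
  d (pt x) (pt y) <= 2 * r ^ lev x + 2 * r ^ lev y.
Proof.
move=> [_ [_ [_ [_ [c [h1 h2]]]]]].
have := clos_dist h1; have := clos_dist h2; have := dtri (pt x) c (pt y).
rewrite (dsym (pt x) c); lra.
Qed.
Arguments horiz_dist [x y] _.


Lemma k0_unique x y : isv x -> isv y -> lev x = k0 -> lev y = k0 -> x = y.
Proof.
move=> [_ hx] [_ hy] ex ey.
have ept : pt x = pt y.
  apply: NNPP => hne.
  have [sepV _] := hsep _ (lexx k0).
  rewrite ex in hx; rewrite ey in hy.
  have := sepV _ _ hx hy hne; have := d_le_diam (pt x) (pt y); move=> A B. by have := le_lt_trans B (le_lt_trans A hdiam); rewrite ltxx.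
by case: x ex ept {hx} => lx px; case: y ey {hy} => ly py /= -> -> ->.
Qed.

Lemma adj_isv x y : adjv x y -> isv x /\ isv y.
Proof. by case=> [[? [? _]]|[? [? _]]]. Qed.
Arguments adj_isv [x y] _.


Lemma adj_horiz x y : adjv x y -> lev y = lev x -> horiz_edge d r k0 V x y.
Proof. by case=> // [[_ [_ [[h _]|[h _]]]]] e; lia. Qed.
Arguments adj_horiz [x y] _.


Lemma adj_down x y : adjv x y -> lev y = lev x + 1 -> vball d r y `<=` vball d r x.
Proof. by case=> [[_ [_ [_ [h _]]]]|[_ [_ [[_ h]|[h _]]]]] e //; lia. Qed.
Arguments adj_down [x y] _.


Lemma adj_up x y : adjv x y -> lev x = lev y + 1 -> vball d r x `<=` vball d r y.
Proof. by case=> [[_ [_ [_ [h _]]]]|[_ [_ [[h _]|[_ h]]]]] e //; lia. Qed.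
Arguments adj_up [x y] _.


Lemma adj_lev x y : adjv x y ->
  lev y = lev x \/ lev y = lev x + 1 \/ lev x = lev y + 1.
Proof. by case=> [[_ [_ [_ [h _]]]]|[_ [_ [[h _]|[h _]]]]]; auto. Qed.
Arguments adj_lev [x y] _.


Definition meas n (f : nat -> vertex Z) :=
  (\sum_(0 <= i < n.+1) absz (lev (f i) - k0)%R)%N.

Lemma meas_replace n f a p : (a.+1 <= n)%N -> k0 <= lev p ->
  lev p = lev (f a.+1) - 1 ->
  (meas n (fun i => if i == a.+1 then p else f i) < meas n f)%N.
Proof.
move=> han hp hl; rewrite /meas.
apply: (@sum_lt _ _ _ a.+1); first lia.
  by move=> i /negbTE ->.
rewrite eqxx hl; lia.
Qed.

Lemma improve n f v w : is_walk adjv n f v w ->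
  (forall m g, is_walk adjv m g v w -> (n <= m)%N) ->
  forall a, (a.+2 <= n)%N -> lev (f a) <= lev (f a.+1) ->
  lev (f a.+2) <= lev (f a.+1) ->
  exists g, is_walk adjv n g v w /\ (meas n g < meas n f)%N.
Proof.
move=> hw hmin a han h1 h2.
have [_ [_ fs]] := hw.
have axy : adjv (f a) (f a.+1) by apply: fs; lia.
have ayz : adjv (f a.+1) (f a.+2) by apply: fs; lia.
have [vx vy] := adj_isv axy; have [_ vz] := adj_isv ayz.
have short1 : adjv (f a) (f a.+2) -> False.
  move=> h; have := walk_splice a 1 hw ltac:(lia).
  have -> : (a + 1).+1 = a.+2 by lia.
  move=> /(_ (fun _ => h)) /(_ ltac:(lia)) /hmin; lia.
set x := f a in h1 h2 axy vx short1 *.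
set y := f a.+1 in h1 h2 axy ayz vy *.
set z := f a.+2 in h1 h2 ayz vz short1 *.
have ly : lev y = lev x \/ lev y = lev x + 1.
  by case: (adj_lev axy) => [|[]]; auto; lia.
have lz : lev z = lev y \/ lev y = lev z + 1.
  by case: (adj_lev ayz) => [|[]]; auto; lia.
case: ly => ly; case: lz => lz.
-
  have hxy := adj_horiz axy ly; have hyz := adj_horiz ayz lz.
  have hk : k0 <= lev y - 1.
    have [hk _] := vy; case: (eqVneq (lev y) k0) => e; last lia.
    exfalso; have [_ [_ [hne _]]] := hxy; apply: hne.
    by apply: k0_unique => //; lia.
  have [p [vp [lp dp]]] := parent vy hk.
  have dxy := horiz_dist hxy; have dyz := horiz_dist hyz.
  have k6 := rk6 (lev y).
  have bx : vball d r x `<=` vball d r p.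
    apply: ball_sub; rewrite lp -ly; rewrite -ly in dxy.
    have := dtri (pt x) (pt y) (pt p); lra.
  have bz : vball d r z `<=` vball d r p.
    apply: ball_sub; rewrite lp lz; rewrite lz in dyz.
    have := dtri (pt z) (pt y) (pt p); rewrite (dsym (pt z) (pt y)); lra.
  have e1 : lev x = lev p + 1 by lia.
  have e2 : lev z = lev p + 1 by lia.
  have axp : adjv x p by right; split => //; split => //; right; split.
  have apz : adjv p z by right; split => //; split => //; left; split.
  have lpy : lev p = lev y - 1 by lia.
  exists (fun i => if i == a.+1 then p else f i); split.
    exact: walk_replace.
  apply: meas_replace; [lia | by case: vp | exact: lpy].
-
  have hxy := adj_horiz axy ly.
  have bz : vball d r y `<=` vball d r z by apply: adj_up.
  have hk : k0 <= lev x - 1 by case: vz; lia.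
  have [p [vp [lp dp]]] := parent vx hk.
  have bx := parent_sub lp dp.
  have e1 : lev x = lev p + 1 by lia.
  have e2 : lev z = lev p by lia.
  case: (classic (p = z)) => pz.
    exfalso; apply: short1; right; split => //; split => //; right.
    by split; [lia | rewrite -pz].
  have axp : adjv x p by right; split => //; split => //; right; split.
  have apz : adjv p z.
    left; split => //; split => //; split => //; split => //.
    have [_ [_ [_ [_ [c [c1 c2]]]]]] := hxy.
    by exists c; split; [apply: sub_clos c1 | apply: sub_clos c2].
  have lpy : lev p = lev y - 1 by lia.
  exists (fun i => if i == a.+1 then p else f i); split.
    exact: walk_replace.
  apply: meas_replace; [lia | by case: vp | exact: lpy].
-
  have hyz := adj_horiz ayz lz.
  have bxy : vball d r y `<=` vball d r x by apply: adj_down.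
  have hk : k0 <= lev z - 1 by case: vx; lia.
  have [q [vq [lq dq]]] := parent vz hk.
  have bz := parent_sub lq dq.
  have e1 : lev z = lev q + 1 by lia.
  have e2 : lev q = lev x by lia.
  case: (classic (q = x)) => qx.
    exfalso; apply: short1; right; split => //; split => //; left.
    by split; [lia | rewrite -qx].
  have axq : adjv x q.
    left; split => //; split => //; split; first by move=> e; apply: qx.
    split => //.
    have [_ [_ [_ [_ [c [c1 c2]]]]]] := hyz.
    by exists c; split; [apply: sub_clos c1 | apply: sub_clos c2].
  have aqz : adjv q z by right; split => //; split => //; left; split.
  have lqy : lev q = lev y - 1 by lia.
  exists (fun i => if i == a.+1 then q else f i); split.
    exact: walk_replace.
  apply: meas_replace; [lia | by case: vq | exact: lqy].
-
  exfalso.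
  have bxy : vball d r y `<=` vball d r x by apply: adj_down.
  have bzy : vball d r y `<=` vball d r z by apply: adj_up.
  case: (classic (x = z)) => xz.
    have := walk_splice a 2 hw ltac:(lia).
    have -> : (a + 2).+1 = a.+3 by lia.
    have H1 : (a.+2 < n)%N -> adjv (f a) (f a.+3).
      move=> h; rewrite -/x xz; apply: fs; lia.
    have H2 : (a + 2)%N = n -> f a = w.
      move=> e; have [_ [fn _]] := hw.
      by rewrite -fn -/x xz /z -e addn2.
    move=> /(_ H1 H2) /hmin; lia.
  have exz : lev z = lev x by lia.
  apply: short1; left; split => //; split => //; split => //; split => //.
  by exists (pt y); split; apply: in_clos; [apply: bxy | apply: bzy];
     apply: ball_center.
Qed.

Lemma final n f v w : is_walk adjv n f v w ->
  (forall a, (a.+2 <= n)%N -> lev (f a) <= lev (f a.+1) ->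
      lev (f a.+1) < lev (f a.+2)) ->
  (forall i j, (i < n)%N -> (j < n)%N ->
       horiz_edge d r k0 V (f i) (f i.+1) ->
       horiz_edge d r k0 V (f j) (f j.+1) -> i = j) /\
  (forall i, (i < n)%N -> horiz_edge d r k0 V (f i) (f i.+1) ->
       forall j, (j <= n)%N -> lev (f i) <= lev (f j)).
Proof.
move=> hw H.
have propag : forall a k, (a.+1 + k < n)%N -> lev (f a) <= lev (f a.+1) ->
    lev (f (a.+1 + k)%N) < lev (f (a.+1 + k)%N.+1).
  move=> a; elim=> [|k IH] hk ha.
    by rewrite addn0; apply: H => //; lia.
  have := IH ltac:(lia) ha => h.
  have -> : (a.+1 + k.+1 = (a.+1 + k).+1)%N by lia.
  by apply: H; [lia | apply: ltW].
have hlev : forall i, horiz_edge d r k0 V (f i) (f i.+1) -> lev (f i.+1) = lev (f i).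
  by move=> i [_ [_ [_ [h _]]]].
split.
  move=> i j hi hj hI hJ; case: (ltngtP i j) => // hij.
  - have := propag i (j - i.+1)%N ltac:(lia); rewrite (hlev i hI) lexx.
    have -> : (i.+1 + (j - i.+1) = j)%N by lia.
    by move=> /(_ isT); rewrite (hlev j hJ) ltxx.
  - have := propag j (i - j.+1)%N ltac:(lia); rewrite (hlev j hJ) lexx.
    have -> : (j.+1 + (i - j.+1) = i)%N by lia.
    by move=> /(_ isT); rewrite (hlev i hI) ltxx.
move=> i hi hI j hj.
case: (leqP j i) => hji.
  have dec : forall a, (a < i)%N -> lev (f a.+1) < lev (f a).
    move=> a ha; case: (lerP (lev (f a)) (lev (f a.+1))) => // hle.
    have := propag a (i - a.+1)%N ltac:(lia) hle.
    have -> : (a.+1 + (i - a.+1) = i)%N by lia.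
    by rewrite (hlev i hI) ltxx.
  have : forall k, (k <= i)%N -> lev (f i) <= lev (f (i - k)%N).
    elim=> [|k IH] hk; first by rewrite subn0.
    have := IH ltac:(lia); have := dec (i - k.+1)%N ltac:(lia).
    have -> : ((i - k.+1).+1 = i - k)%N by lia.
    move=> h1 h2; apply: (le_trans h2); exact: ltW.
  move=> /(_ (i - j)%N ltac:(lia)).
  by have -> : (i - (i - j) = j)%N by lia.
have : forall k, (i.+1 + k <= n)%N -> lev (f i) <= lev (f (i.+1 + k)%N).
  elim=> [|k IH] hk; first by rewrite addn0 (hlev i hI).
  have := IH ltac:(lia).
  have := propag i k ltac:(lia); rewrite (hlev i hI) lexx => /(_ isT).
  have -> : (i.+1 + k.+1 = (i.+1 + k).+1)%N by lia.
  move=> h1 h2; apply: (le_trans h2); exact: ltW.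
move=> /(_ (j - i.+1)%N ltac:(lia)).
by have -> : (i.+1 + (j - i.+1) = j)%N by lia.
Qed.

Lemma reach (hZ : exists x y : Z, x <> y) v v' : isv v -> isv v' ->
  exists n f, is_walk adjv n f v v'.
Proof.
have : forall t v v', isv v -> isv v' ->
    (absz (lev v - k0)%R + absz (lev v' - k0)%R <= t)%N ->
    exists n f, is_walk adjv n f v v'; last by move=> h hv hv'; exact: h.
elim=> [|t IH] {}v {}v' hv hv' ht.
  exists 0%N, (fun _ => v); split => //; split => //.
  apply: k0_unique => //; [case: hv | case: hv']; lia.
case: (eqVneq (lev v) k0) => ev.
  case: (eqVneq (lev v') k0) => ev'.
    exists 0%N, (fun _ => v); split => //; split => //.
    exact: k0_unique.
  have hk : k0 <= lev v' - 1 by case: hv'; lia.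
  have [p [vp [lp dp]]] := parent hv' hk.
  have [n [f hf]] := IH v p hv vp ltac:(lia).
  exists n.+1; eexists; apply: (walk_snoc hf).
  right; split => //; split => //; left; split; first lia.
  exact: parent_sub lp dp.
have hk : k0 <= lev v - 1 by case: hv; lia.
have [p [vp [lp dp]]] := parent hv hk.
have [n [f hf]] := IH p v' vp hv' ltac:(lia).
exists n.+1; eexists; apply: (walk_cons _ hf).
right; split => //; split => //; right; split; first lia.
exact: parent_sub lp dp.
Qed.

End HA.

Theorem mainTheorem8 (R : realType) (Z : Type) (d : Z -> Z -> R)
  (r : R) (k0 : int) (V : int -> set Z) :
  is_metric d -> bounded_metric d -> (exists x y : Z, x <> y) ->
  0 < r -> r <= 6^-1 ->
  diam d < r ^ k0 -> (forall k : int, diam d < r ^ k -> k <= k0) ->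
  (forall k : int, k0 <= k -> maximal_separated d (r ^ k) (V k)) ->
  forall v v' : vertex Z, is_vertex k0 V v -> is_vertex k0 V v' ->
  exists (n : nat) (f : nat -> vertex Z),
    is_geodesic (adj d r k0 V) n f v v' /\
    (forall i j, (i < n)%N -> (j < n)%N ->
       horiz_edge d r k0 V (f i) (f i.+1) ->
       horiz_edge d r k0 V (f j) (f j.+1) -> i = j) /\
    (forall i, (i < n)%N -> horiz_edge d r k0 V (f i) (f i.+1) ->
       forall j, (j <= n)%N -> lev (f i) <= lev (f j)).
Proof.
move=> hm hb hZ r0 r6 hdiam _ hsep v v' hv hv'.
have [n0 [f0 hf0]] := @reach _ _ _ _ _ _ hm hb r0 r6 hdiam hsep hZ v v' hv hv'.
have [N [[fN hfN] Nmin]] : exists N, (exists f, is_walk (adj d r k0 V) N f v v') /\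
    forall m g, is_walk (adj d r k0 V) m g v v' -> (N <= m)%N.
  have : forall t n f, (n <= t)%N -> is_walk (adj d r k0 V) n f v v' ->
      exists N, (exists f, is_walk (adj d r k0 V) N f v v') /\
      forall m g, is_walk (adj d r k0 V) m g v v' -> (N <= m)%N.
    elim=> [|t IH] n f hn hf.
      have e0 : n = 0%N by lia.
      exists 0%N; split; first by exists f; rewrite -e0.
      by [].
    case: (classic (exists m g, is_walk (adj d r k0 V) m g v v' /\ (m < n)%N)).
      by move=> [m [g [hg hmn]]]; apply: (IH m g) => //; lia.
    move=> hno; exists n; split; first by exists f.
    move=> m g hg; rewrite leqNgt; apply/negP => hmn; apply: hno.
    by exists m, g.
  by move=> /(_ n0 n0 f0 (leqnn _) hf0).
have : forall M f, is_walk (adj d r k0 V) N f v v' -> (meas _ k0 N f < M)%N ->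
  exists f, is_geodesic (adj d r k0 V) N f v v' /\
    (forall i j, (i < N)%N -> (j < N)%N ->
       horiz_edge d r k0 V (f i) (f i.+1) ->
       horiz_edge d r k0 V (f j) (f j.+1) -> i = j) /\
    (forall i, (i < N)%N -> horiz_edge d r k0 V (f i) (f i.+1) ->
       forall j, (j <= N)%N -> lev (f i) <= lev (f j)).
  elim=> [//|M IH] f hf hM.
  case: (classic (exists a, (a.+2 <= N)%N /\ lev (f a) <= lev (f a.+1) /\
                            lev (f a.+2) <= lev (f a.+1))).
    move=> [a [ha [h1 h2]]].
    have [g [hg hgm]] := @improve _ _ _ _ _ _ hm hb r0 r6 hdiam hsep _ _ _ _ hf Nmin _ ha h1 h2.
    apply: (IH g hg); lia.
  move=> hno; exists f; split; first by split.
  apply: (@final _ _ _ _ _ _ r0 r6 hdiam _ _ _ _ hf) => a ha h1.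
  case: (ltP (lev (f a.+1)) (lev (f a.+2))) => // h2.
  by exfalso; apply: hno; exists a.
move=> /(_ (meas _ k0 N fN).+1 fN hfN (ltnSn _)) [f [hg hrest]].
by exists N, f.
Qed.
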